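(* Let $N\ge1$ and $\eta_S,\eta_F,\eta_{FS}\in\mathbb{R}$, and let $(X_1,\dots,X_N)\in\{0,1\}^N$ have distribution $$\Pr(X_1=x_1,\dots,X_N=x_N)=\frac{1}{Z_1}\Big(e^{\eta_F\sum_ix_i}+e^{\eta_S+(\eta_{FS}+\eta_F)\sum_ix_i}\Big),\qquad Z_1=(1+e^{\eta_F})^N+e^{\eta_S}(1+e^{\eta_F+\eta_{FS}})^N$$ (the marginal law of the firm nodes in the graph with $N$ firm nodes of weight $\eta_F$, each joined by an edge of weight $\eta_{FS}$ to a single sector node of weight $\eta_S$). Then $$\sum_{i=1}^NX_i\ \stackrel{d}{=}\ YB_1+(1-Y)B_2,$$ where $Y,B_1,B_2$ are independent, $Y\sim\mathrm{Bernoulli}\big(e^{\eta_S}(1+e^{\eta_F}e^{\eta_{FS}})^N/Z_1\big)$, $B_1\sim\mathrm{Binomial}$ with $N$ trials and success probability $\frac{e^{\eta_F}e^{\eta_{FS}}}{1+e^{\eta_F}e^{\eta_{FS}}}$, and $B_2\sim\mathrm{Binomial}$ with $N$ trials and success probability $\frac{e^{\eta_F}}{1+e^{\eta_F}}$. *)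

(* Defs.v *)
From mathcomp Require Import all_boot all_order all_algebra.
From mathcomp Require Import reals sequences exp.
Set Implicit Arguments. Unset Strict Implicit. Unset Printing Implicit Defensive.
Import Order.TTheory GRing.Theory Num.Theory.
Local Open Scope ring_scope.

Section Defs.
Variables (R : realType) (N : nat) (eS eF eFS : R).

Definition nones (x : {ffun 'I_N -> bool}) : nat := \sum_(i < N) (x i : nat).

Definition Z1 : R :=
  (1 + expR eF) ^+ N + expR eS * (1 + expR (eF + eFS)) ^+ N.

Definition pX (x : {ffun 'I_N -> bool}) : R :=
  (expR (eF * (nones x)%:R) + expR (eS + (eFS + eF) * (nones x)%:R)) / Z1.

Definition law_sum (k : nat) : R := \sum_(x | nones x == k) pX x.

End Defs.

Definition bernoulli_pmf (R : realType) (q : R) (y : bool) : R :=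
  if y then q else 1 - q.

Definition binomial_pmf (R : realType) (n : nat) (p : R) (b : nat) : R :=
  'C(n, b)%:R * p ^+ b * (1 - p) ^+ (n - b).

Definition law_mixture (R : realType) (n : nat) (q p1 p2 : R) (k : nat) : R :=
  \sum_(y : bool) \sum_(b1 < n.+1) \sum_(b2 < n.+1)
    (if (y * b1 + (1 - y) * b2)%N == k then
       bernoulli_pmf q y * binomial_pmf n p1 b1 * binomial_pmf n p2 b2
     else 0).

(* Main.v *)
Require Import Defs.
From mathcomp Require Import all_boot all_order all_algebra.
From mathcomp Require Import reals sequences exp.
From mathcomp Require Import ring lra.
Import Order.TTheory GRing.Theory Num.Theory.
Local Open Scope ring_scope.

Lemma nones_card N (x : {ffun 'I_N -> bool}) : nones x = #|[set i | x i]|.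
Proof.
transitivity (\sum_(i < N) (x i : nat))%N; first by [].
rewrite -sum1_card [RHS]big_mkcond.
apply: eq_bigr => i _. by rewrite inE; case: (x i).
Qed.

Lemma count_nones (N k : nat) :
  #|[pred x : {ffun 'I_N -> bool} | nones x == k]| = 'C(N, k).
Proof.
rewrite -[in RHS](card_ord N) -card_draws.
pose f := fun A : {set 'I_N} => [ffun i => i \in A].
pose g := fun x : {ffun 'I_N -> bool} => [set i | x i].
have fK : cancel f g by move=> A; apply/setP=> i; rewrite /f /g inE ffunE.
have gK : cancel g f by move=> x; apply/ffunP=> i; rewrite /f /g ffunE inE.
rewrite -(card_image (can_inj gK)).
apply: eq_card => A; rewrite inE.
apply/imageP/idP.
- by move=> [x]; rewrite inE nones_card => hx ->.
- move=> hA; exists (f A); last by rewrite fK.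
  by rewrite inE nones_card -/(g (f A)) fK.
Qed.

Lemma law_sumE (R : realType) (N : nat) (eS eF eFS : R) k :
  law_sum N eS eF eFS k = 'C(N, k)%:R * (expR eF ^+ k + expR eS * (expR (eF + eFS)) ^+ k) / Z1 N eS eF eFS.
Proof.
rewrite /law_sum.
rewrite (eq_bigr (fun _ => (expR eF ^+ k + expR eS * (expR (eF + eFS)) ^+ k) / Z1 N eS eF eFS)); last first.
  move=> x /eqP hx; rewrite /pX hx expRM_natr expRD expRM_natr (addrC eFS).
  done.
by rewrite sumr_const count_nones -[LHS]mulr_natl mulrA.
Qed.

Lemma binom_sum1 (R : realType) n (p : R) : \sum_(b < n.+1) binomial_pmf n p b = 1.
Proof.
have := exprDn (1 - p) p n.
rewrite subrK expr1n => ->.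
apply: eq_bigr => i _.
by rewrite /binomial_pmf -mulr_natl; ring.
Qed.

Lemma mixE (R : realType) n (q p1 p2 : R) k :
  law_mixture n q p1 p2 k =
  q * binomial_pmf n p1 k + (1 - q) * binomial_pmf n p2 k.
Proof.
rewrite /law_mixture big_bool /=.
have H (p p' : R) (c : R) :
   \sum_(b1 < n.+1) \sum_(b2 < n.+1)
      (if (b1 : nat) == k then c * binomial_pmf n p b1 * binomial_pmf n p' b2 else 0)
   = c * binomial_pmf n p k.
  transitivity (\sum_(b1 < n.+1) (if (b1 : nat) == k then c * binomial_pmf n p b1 else 0)).
    apply: eq_bigr => b1 _; case: eqP => _; last by rewrite big1.
    by rewrite -mulr_sumr binom_sum1 mulr1.
  case: (leqP k n) => hk.
    rewrite (bigD1 (Ordinal (hk : (k < n.+1)%N))) //= eqxx big1 ?addr0 //.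
    by move=> i hi; case: eqP => // hik; case/eqP: hi; apply: val_inj.
  rewrite big1; last by move=> i _; case: eqP => // hik; move: (ltn_ord i); rewrite hik ltnS leqNgt hk.
  by rewrite /binomial_pmf bin_small // !mul0r mulr0.
rewrite -(H p1 p2 q) -(H p2 p1 (1 - q)); congr (_ + _).
  apply: eq_bigr => b1 _; apply: eq_bigr => b2 _.
  by rewrite mul1n mul0n addn0.
rewrite exchange_big /=.
apply: eq_bigr => b1 _; apply: eq_bigr => b2 _.
rewrite mul0n add0n mul1n; case: eqP => //= _.
by rewrite /bernoulli_pmf mulrAC.
Qed.

Theorem proposition2 (R : realType) (N : nat) (eS eF eFS : R) (hN : (1 <= N)%N) :
  forall k : nat,
    law_sum N eS eF eFS k =
    law_mixture N
      (expR eS * (1 + expR eF * expR eFS) ^+ N / Z1 N eS eF eFS)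
      (expR eF * expR eFS / (1 + expR eF * expR eFS))
      (expR eF / (1 + expR eF)) k.
Proof.
move=> k; rewrite law_sumE mixE /binomial_pmf /Z1 expRD.
case: (leqP k N) => hk; last by rewrite bin_small // !mul0r !mulr0 addr0.
have [m ->] : exists m, N = (k + m)%N by exists (N - k)%N; rewrite subnKC.
rewrite addKn.
have ha : 0 < expR eF := expR_gt0 _.
have hb : 0 < expR eFS := expR_gt0 _.
have hs : 0 < expR eS := expR_gt0 _.
set a := expR eF; set b := expR eFS; set s := expR eS.
set C := ('C(k + m, k))%:R.
have h1 : 1 + a != 0 by rewrite gt_eqF // ltr_wpDl.
have h2 : 1 + a * b != 0 by rewrite gt_eqF // ltr_wpDl // mulr_gt0.
have h3 : (1 + a) ^+ (k + m) + s * (1 + a * b) ^+ (k + m) != 0.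
  by rewrite gt_eqF // ltr_wpDl ?mulr_gt0 ?exprn_gt0 ?ltr_wpDl // ?mulr_gt0 // ?exprn_ge0 // addr_ge0 // ltW.
have e1 : 1 - a * b / (1 + a * b) = (1 + a * b)^-1 by field.
have e2 : 1 - a / (1 + a) = (1 + a)^-1 by field.
rewrite e1 e2 !expr_div_n !exprVn !exprD.
field.
by rewrite -!exprD h3 !expf_neq0.
Qed.
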